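(* There is an absolute constant $C$ such that the following holds. Let $\Sigma$ be a set with $|\Sigma|=r\ge 2$. If $n\ge 2+\log r$ and $\ell\ge 2^7r^3n$, then there exists a set $S\subseteq\Sigma^\ell$ of size $2^n$ such that for all $(v,a)\in S\times\Sigma$: (1) $|v[a]|\ge \frac{\ell}{2r}$; and (2) for every $I\subseteq v[a]$ of size $\ell/(8r)$, there are at most $Cr^2$ pairs $(w,b)\in S\times\Sigma$ for which $|I\cap w[b]|\ge \frac12|v[a]\cap w[b]|$.
   Context: For $v=(v_1,\dots,v_\ell)\in\Sigma^\ell$ and $a\in\Sigma$, $v[a]=\{i\in\{1,\dots,\ell\}: v_i=a\}$. Logarithms are base 2. *)

(* Defs.v *)
From Stdlib Require Import Reals.
From mathcomp Require Import all_boot.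
Set Implicit Arguments. Unset Strict Implicit. Unset Printing Implicit Defensive.

Definition log2 (x : R) : R := Rdiv (ln x) (ln (IZR 2)).

Definition n_ge_2_plus_log (n r : nat) : Prop :=
  Rle (Rplus (IZR 2) (log2 (INR r))) (INR n).

Definition pos (Sigma : finType) (l : nat) (v : l.-tuple Sigma) (a : Sigma)
  : {set 'I_l} := [set i : 'I_l | tnth v i == a].

(* Main.v *)
Require Import Defs.
From mathcomp Require Import all_boot.
From mathcomp Require Import all_order all_algebra.
From mathcomp Require Import reals sequences exp.
From mathcomp Require Rstruct.
From mathcomp Require Import ring lra zify.
From Stdlib Require Import Lia.
From Stdlib Require Reals.
Set Implicit Arguments. Unset Strict Implicit. Unset Printing Implicit Defensive.
Import Order.TTheory GRing.Theory Num.Theory.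

Module Part1.
Local Open Scope ring_scope.

Lemma ind_exists (R : numDomainType) (T : finType) (P : pred T) :
  (([exists y, P y] : nat)%:R : R) <= \sum_y ((P y : nat)%:R).
Proof.
case: (boolP [exists y, P y]) => [/existsP [y Py]|_].
  by rewrite (bigD1 y) //= Py lerDl sumr_ge0 // => i _; rewrite ler0n.
by rewrite sumr_ge0 // => i _; rewrite ler0n.
Qed.

Lemma markov (R : numDomainType) (T : finType) (P : pred T) (F : T -> R) :
  (forall x, 0 <= F x) -> (forall x, P x -> 1 <= F x) ->
  \sum_x ((P x : nat)%:R) <= \sum_x F x.
Proof.
move=> F0 F1; apply: ler_sum => x _; case: (boolP (P x)) => Px /=; first exact: F1.
exact: F0.
Qed.

Lemma sum_tuple_prod (R : numDomainType) (S : finType) l (g : 'I_l -> S -> R) :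
  \sum_(w : l.-tuple S) \prod_(i < l) g i (tnth w i) = \prod_(i < l) \sum_c g i c.
Proof.
rewrite bigA_distr_bigA /=.
rewrite (reindex (fun f : {ffun 'I_l -> S} => [tuple f i | i < l])) /=.
  by apply: eq_bigr => f _; apply: eq_bigr => i _; rewrite tnth_mktuple.
exists (fun w : l.-tuple S => [ffun i => tnth w i]) => [f _|w _].
  by apply/ffunP => i; rewrite ffunE tnth_mktuple.
by apply: eq_from_tnth => i; rewrite tnth_mktuple ffunE.
Qed.

Lemma prodM (R : comPzSemiRingType) (I : eqType) (r : seq I) (P : pred I) (F G : I -> R) :
  \prod_(i <- r | P i) (F i * G i) = \prod_(i <- r | P i) F i * \prod_(i <- r | P i) G i.
Proof. by apply: prodrM_comm => i j _ _; exact: mulrC. Qed.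

Lemma cond_sum (R : numDomainType) (T : finType) M (i0 : 'I_M)
  (G : T -> 'I_M -> T -> R) :
  \sum_(f : {ffun 'I_M -> T}) \prod_j G (f i0) j (f j) =
  \sum_v \prod_j (if j == i0 then G v j v else \sum_w G v j w).
Proof.
have step (f : {ffun 'I_M -> T}) : \sum_v \prod_j
   ((if j == i0 then ((f j == v) : nat)%:R else 1) * G v j (f j)) = \prod_j G (f i0) j (f j).
  have E v : \prod_j (if j == i0 then ((f j == v) : nat)%:R else 1) = ((f i0 == v) : nat)%:R :> R.
    by rewrite (bigD1 i0) //= eqxx big1 ?mulr1 // => j /negPf ->.
  rewrite (eq_bigr (fun v => ((f i0 == v) : nat)%:R * \prod_j G v j (f j))); last first.
    by move=> v _; rewrite prodM E.
  rewrite (bigD1 (f i0)) //= eqxx mul1r [X in _ + X]big1 ?addr0 // => v.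
  by rewrite eq_sym => /negPf ->; rewrite mul0r.
rewrite (eq_bigr _ (fun f _ => esym (step f))).
rewrite exchange_big /=; apply: eq_bigr => v _.
rewrite -[LHS](bigA_distr_bigA (fun j w => ((if j == i0 then ((w == v):nat)%:R else 1) * G v j w))) /=.
apply: eq_bigr => j _.
case: eqP => [->|_].
  rewrite (bigD1 v) //= eqxx mul1r big1 ?addr0 // => w /negPf ->; by rewrite mul0r.
by apply: eq_bigr => w _; rewrite mul1r.
Qed.

Lemma weight_sum (R : realType) (S : finType) l (T : {set S}) (b : 'I_l -> R) :
  (0 < #|S|)%N -> (forall i, 0 <= b i) ->
  \sum_(w : l.-tuple S) \prod_i (if tnth w i \in T then b i else 1)
    <= (#|S|%:R)^+l * expR (#|T|%:R / #|S|%:R * \sum_i (b i - 1)).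
Proof.
move=> S0 b0; rewrite (sum_tuple_prod (fun i c => if c \in T then b i else 1)).
set r : R := #|S|%:R; set t : R := #|T|%:R.
have r0 : 0 < r by rewrite ltr0n.
have tr : t <= r by rewrite ler_nat max_card.
have E i : \sum_c (if c \in T then b i else 1) = r + t * (b i - 1).
  transitivity (\sum_c (1 + (if c \in T then b i - 1 else 0))).
    by apply: eq_bigr => c _; case: (c \in T); rewrite ?addr0 // addrCA subrr addr0.
  rewrite big_split /= -big_mkcond /= !sumr_const /r /t.
  by rewrite mulr_natl.
under eq_bigr do rewrite E.
apply: (@le_trans _ _ (\prod_(i < l) (r * expR (t / r * (b i - 1))))).
  apply: ler_prod => i _; apply/andP; split.
    have := b0 i; have t0 : 0 <= t by rewrite ler0n.
    nra.
  apply: (le_trans _ (ler_wpM2l (ltW r0) (expR_ge1Dx _))).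
  have -> : r * (1 + t / r * (b i - 1)) = r + t * (b i - 1).
    by field; rewrite lt0r_neq0.
  done.
by rewrite prodM prodr_const card_ord mulr_sumr expR_sum.
Qed.

End Part1.
Import Part1.

Module Part2.

Definition bad (S : finType) l (v : l.-tuple S) a (I : {set 'I_l}) (w : l.-tuple S) b : bool :=
  #|pos v a :&: pos w b| <= 2 * #|I :&: pos w b|.

Lemma card_sumnat (T : finType) (A : {pred T}) : #|A| = \sum_x (x \in A : nat).
Proof. by rewrite -sum1_card big_mkcond /=; apply: eq_bigr => x _; case: (x \in A). Qed.

Lemma cnt (S : finType) l (w : l.-tuple S) (T : {set S}) (J : {set 'I_l}) :
  \sum_(b in T) #|J :&: pos w b| = #|[pred i | (tnth w i \in T) && (i \in J)]|.
Proof.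
under eq_bigr do rewrite card_sumnat.
rewrite card_sumnat exchange_big /=; apply: eq_bigr => i _.
rewrite /pos inE /=; under eq_bigr do rewrite !inE.
case: (boolP (tnth w i \in T)) => wT /=.
  rewrite (bigD1 (tnth w i)) //= eqxx andbT big1 ?addn0 // => b /andP [_ nb].
  by rewrite eq_sym (negPf nb) andbF.
rewrite big1 // => b bT; case: eqP => [E|]; [by rewrite E bT in wT | by rewrite andbF].
Qed.

Lemma YleX (S : finType) l (v : l.-tuple S) a (I : {set 'I_l}) (w : l.-tuple S) (T : {set S}) :
  I \subset pos v a -> [forall b in T, bad v a I w b] ->
  #|[pred i | (tnth w i \in T) && (i \in pos v a :\: I)]| <=
  #|[pred i | (tnth w i \in T) && (i \in I)]|.
Proof.
move=> HI /forall_inP Hb; rewrite -!cnt; apply: leq_sum => b bT.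
have := Hb b bT; rewrite /bad.
have E : #|pos v a :&: pos w b| = #|I :&: pos w b| + #|(pos v a :\: I) :&: pos w b|.
  rewrite -(cardsID I (pos v a :&: pos w b)); congr (_ + _); apply: eq_card => i; rewrite !inE.
    case: (boolP (i \in I)) => iI; rewrite ?andbF ?andbT //=.
    by have := subsetP HI i iI; rewrite inE => ->.
  by case: (i \in I); rewrite ?andbF //= andbC.
rewrite E; lia.
Qed.

End Part2.
Import Part2.

Module Part3.
Local Open Scope ring_scope.

Lemma sum_ind (R : numDomainType) (T : finType) (A : {pred T}) :
  \sum_x ((x \in A : nat)%:R : R) = #|A|%:R.
Proof. by rewrite -natr_sum -card_sumnat. Qed.

Lemma prod_if2 (R : numDomainType) (T : finType) (P : pred T) (c : R) :
  \prod_x (if P x then c else 1) = c ^+ #|P|.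
Proof. by rewrite -big_mkcond /= prodr_const. Qed.

Lemma core (R : realType) (S : finType) l (v : l.-tuple S) a (I : {set 'I_l}) (T : {set S}) :
  (0 < #|S|)%N -> I \subset pos v a -> (4 * #|I| <= #|pos v a|)%N ->
  \sum_(w : l.-tuple S) (([forall b in T, bad v a I w b] : nat)%:R : R)
    <= (#|S|%:R)^+l * expR (- (#|T|%:R * #|I|%:R / (2 * #|S|%:R))).
Proof.
move=> S0 HI H4.
set A := pos v a; set A' := A :\: I.
pose be i : R := if i \in I then 2 else if i \in A' then 2^-1 else 1.
have be0 i : 0 <= be i by rewrite /be; case: ifP => _; [|case: ifP => _]; lra.
apply: le_trans (markov (F := fun w => \prod_i (if tnth w i \in T then be i else 1)) _ _) _.
- by move=> w; apply: prodr_ge0 => i _; case: ifP.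
- move=> w Hw.
  have E i : (if tnth w i \in T then be i else 1) =
     (if (tnth w i \in T) && (i \in I) then 2 else 1) *
     (if (tnth w i \in T) && (i \in A') then 2^-1 else 1).
    rewrite /be /A'; case: (tnth w i \in T) => /=; last by rewrite mulr1.
    case: (boolP (i \in I)) => iI; first by rewrite inE iI /= mulr1.
    by case: (i \in _ :\: _); rewrite ?mul1r ?mulr1.
  rewrite (eq_bigr _ (fun i _ => E i)) prodM !prod_if2.
  have := YleX HI Hw; rewrite -/A -/A' => YX.
  apply: (@le_trans _ _ (2 ^+ #|[pred i | (tnth w i \in T) && (i \in A')]| *
                       2^-1 ^+ #|[pred i | (tnth w i \in T) && (i \in A')]|)).
    by rewrite -exprMn mulfV ?expr1n // pnatr_eq0.
  rewrite ler_wpM2r // ?exprn_ge0 ?invr_ge0 ?ler0n //.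
  by rewrite ler_eXn2l // ltr1n.
apply: le_trans (weight_sum _ S0 be0) _.
rewrite ler_pM2l ?exprn_gt0 ?ltr0n // ler_expR.
set r : R := #|S|%:R; set t : R := #|T|%:R; set s : R := #|I|%:R.
have r0 : 0 < r by rewrite ltr0n.
have t0 : 0 <= t by rewrite ler0n.
have Hs : \sum_i (be i - 1) = s - #|A'|%:R / 2.
  rewrite (eq_bigr (fun i => ((i \in I : nat)%:R - (i \in A' : nat)%:R / 2))); last first.
    move=> i _; rewrite /be /A'; case: (boolP (i \in I)) => iI.
      by rewrite inE iI /=; lra.
    by case: (i \in _ :\: _) => /=; lra.
  by rewrite sumrB -mulr_suml !sum_ind.
have HA' : (3 * #|I| <= #|A'|)%N.
  have := cardsID I A; have -> : A :&: I = I by apply/setIidPr.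
  rewrite -/A' => E; move: H4; rewrite -/A; lia.
have HA'r : 3%:R * s <= #|A'|%:R by rewrite /s -natrM ler_nat.
rewrite Hs.
have -> : - (t * s / (2 * r)) = t / r * (- s / 2) by field; rewrite lt0r_neq0.
apply: ler_wpM2l; first by rewrite divr_ge0 // ltW.
lra.
Qed.

End Part3.
Import Part3.

Module Part4.
Local Open Scope ring_scope.

Lemma e94 (R : realType) : 9 / 4 <= expR (1 : R).
Proof.
have -> : expR (1:R) = expR (2^-1) * expR (2^-1) by rewrite -expRD; congr expR; field.
have := expR_ge1Dx (2^-1 : R).
set y := expR _ => hy.
have h3 : 3 / 2 <= y by move: hy; rewrite -[_ + _]/(1 + 2^-1); lra.
apply: (@le_trans _ _ ((3 / 2) * (3 / 2))); first lra.
by apply: ler_pM => //; lra.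
Qed.

Lemma e2 (R : realType) : 2 <= expR (1 : R).
Proof. have := e94 R; lra. Qed.

Lemma pow2_le (R : realType) k : (2 : R) ^+ k <= expR k%:R.
Proof.
rewrite -[k%:R]mulr1 expRM_natl; apply: lerXn2r; rewrite ?nnegrE ?e2 //.
by apply: ltW; apply: expR_gt0.
Qed.

Lemma freq_bound (R : realType) (S : finType) l a : (0 < #|S|)%N ->
  \sum_(w : l.-tuple S) ((~~ (l <= 2 * #|S| * #|pos w a|)%N : nat)%:R : R)
    <= (#|S|%:R)^+l * expR (- (l%:R / (18 * #|S|%:R))).
Proof.
move=> S0.
set r : R := #|S|%:R; set L : R := l%:R.
have r0 : 0 < r by rewrite ltr0n.
have L0 : 0 <= L by rewrite ler0n.
pose F w := expR (L / (2 * r)) * \prod_(i < l) (if tnth w i \in [set a] then expR (-1) else 1).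
apply: le_trans (markov (F := F) _ _) _.
- move=> w; rewrite /F mulr_ge0 ?expR_ge0 // prodr_ge0 // => i _.
  by case: ifP => _; rewrite ?expR_ge0.
- move=> w; rewrite -ltnNge => Hw.
  rewrite /F prod_if2 -expRM_natl -expRD; apply: le_trans (expR_ge1Dx _); rewrite lerDl.
  have -> : #|[pred i | tnth w i \in [set a]]| = #|pos w a|.
    by apply: eq_card => i; rewrite !inE.
  have : ((2 * #|S| * #|pos w a|)%:R : R) < L by rewrite ltr_nat.
  rewrite !natrM -/r; set z : R := #|pos w a|%:R => H.
  have z0 : 0 <= z by rewrite ler0n.
  have -> : L / (2 * r) + z * -1 = (L - 2 * r * z) / (2 * r) by field; rewrite lt0r_neq0.
  by rewrite divr_ge0 //; lra.
rewrite /F -mulr_sumr.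
apply: le_trans.
  apply: ler_wpM2l; first exact: expR_ge0.
  apply: (@weight_sum R S l [set a] (fun=> expR (-1))) => // i; exact: expR_ge0.
rewrite mulrCA ler_pM2l ?exprn_gt0 // -expRD ler_expR cards1 sumrB sumr_const card_ord.
set x := expR (-1 : R).
have x49 : x <= 4 / 9.
  rewrite /x expRN; have := e94 R; have := expR_gt0 (1 : R) => h1 h2.
  rewrite -(invrK (4/9 : R)) lef_pV2 ?posrE ?invr_gt0 //; lra.
have -> : \sum_(i < l) (1 : R) = L by rewrite sumr_const card_ord.
rewrite -/r -mulr_natr -/L.
have key : L / (2 * r) + 1 / r * (x * L - L) + L / (18 * r) = L / r * (x - 4 / 9).
  by field; rewrite lt0r_neq0.
have : L / r * (x - 4 / 9) <= 0.
  by rewrite mulr_ge0_le0 ?divr_ge0 ?(ltW r0) //; lra.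
lra.
Qed.

End Part4.
Import Part4.

Module Part5.
Local Open Scope ring_scope.

Lemma prod_if1 (R : numDomainType) M (i : 'I_M) (c d : R) :
  \prod_j (if j == i then c else d) = c * d ^+ (M - 1).
Proof.
rewrite (bigD1 i) //= eqxx; congr (_ * _).
rewrite (eq_bigr (fun=> d)) => [|j /negPf -> //].
by rewrite prodr_const cardC1 card_ord subn1.
Qed.

Lemma card_words (S : finType) l : #|{: l.-tuple S}| = (#|S| ^ l)%N.
Proof. exact: card_tuple. Qed.

Lemma sum_words (R : numDomainType) (S : finType) l (c : R) :
  \sum_(w : l.-tuple S) c = (#|S|%:R) ^+ l * c.
Proof.
rewrite sumr_const (_ : #|_| = #|S| ^ l)%N; last exact: card_tuple.
by rewrite -[LHS]mulr_natr natrX mulrC.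
Qed.

Lemma countB (R : realType) (S : finType) l M (i : 'I_M) a : (0 < #|S|)%N ->
  \sum_(f : {ffun 'I_M -> l.-tuple S})
     ((~~ (l <= 2 * #|S| * #|pos (f i) a|)%N : nat)%:R : R)
  <= ((#|S|%:R)^+l)^+M * expR (- (l%:R / (18 * #|S|%:R))).
Proof.
move=> S0.
pose G (v : l.-tuple S) (k : 'I_M) (w : l.-tuple S) : R :=
  if k == i then ((~~ (l <= 2 * #|S| * #|pos v a|)%N : nat)%:R) else 1.
have E (f : {ffun 'I_M -> l.-tuple S}) : \prod_k G (f i) k (f k) =
   ((~~ (l <= 2 * #|S| * #|pos (f i) a|)%N : nat)%:R).
  by rewrite /G; cbv beta; rewrite (@prod_if1 R _ i) expr1n mulr1.
rewrite (eq_bigr _ (fun f _ => esym (E f))) cond_sum /G; cbv beta.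
rewrite (eq_bigr (fun v => ((~~ (l <= 2 * #|S| * #|pos v a|)%N : nat)%:R) *
                          ((#|S|%:R)^+l)^+(M - 1))); last first.
  move=> v _; rewrite (eq_bigr (fun k => if k == i then
      ((~~ (l <= 2 * #|S| * #|pos v a|)%N : nat)%:R) else (#|S|%:R)^+l)).
    by rewrite (@prod_if1 R _ i).
  by move=> k _; case: eqP => // _; rewrite sum_words mulr1.
rewrite -mulr_suml.
have M0 : (0 < M)%N := leq_ltn_trans (leq0n i) (ltn_ord i).
have -> : ((#|S|%:R)^+l)^+M = ((#|S|%:R)^+l)^+(M-1) * (#|S|%:R)^+l :> R.
  by rewrite -exprSr subn1 prednK.
rewrite -mulrA (mulrC (_ ^+ (M - 1))).
apply: ler_wpM2r; first by rewrite exprn_ge0 // exprn_ge0 // ler0n.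
exact: freq_bound.
Qed.

Lemma countA (R : realType) (S : finType) l M (i j : 'I_M) : i != j ->
  \sum_(f : {ffun 'I_M -> l.-tuple S}) (((f i == f j) : nat)%:R : R)
  <= ((#|S|%:R)^+l)^+(M - 1).
Proof.
move=> ij.
have M2 : (2 <= M)%N.
  case: i j ij => [a Ha] [b Hb] /= ab; apply: leq_ltn_trans (_ : (maxn a b) < M)%N.
    by move: ab; rewrite -val_eqE /=; lia.
  by rewrite gtn_max Ha Hb.
pose G (v : l.-tuple S) (k : 'I_M) (w : l.-tuple S) : R :=
  if k == j then ((w == v) : nat)%:R else 1.
have E (f : {ffun 'I_M -> l.-tuple S}) : \prod_k G (f i) k (f k) = ((f i == f j) : nat)%:R.
  rewrite /G; cbv beta; rewrite (bigD1 j) //= eqxx big1 ?mulr1 ?(eq_sym (f j)) //.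
  by move=> k /negPf ->.
rewrite (eq_bigr _ (fun f _ => esym (E f))) cond_sum /G; cbv beta.
set Nw : R := (#|S|%:R)^+l.
rewrite (eq_bigr (fun v => \prod_k (if ~~ ((k == i) || (k == j)) then Nw else 1))); last first.
  move=> v _; apply: eq_bigr => k _.
  case: (boolP (k == i)) => [/eqP ->|ki]; first by rewrite eqxx (negPf ij).
  case: (boolP (k == j)) => kj /=.
    by rewrite (bigD1 v) //= eqxx big1 ?addr0 // => w /negPf ->.
  by rewrite sum_words mulr1.
rewrite prod_if2 sum_words.
have Hc : (#|[pred k | ~~ ((k == i) || (k == j))]| = M - 2)%N.
  have := cardC (pred2 i j); rewrite card2 ij card_ord => H.
  have -> : #|[pred k | ~~ ((k == i) || (k == j))]| = #|[predC pred2 i j]|.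
    by apply: eq_card => k; rewrite !inE.
  move: (#|[predC pred2 i j]|) H => c H.
  by rewrite -H /= addKn.
rewrite Hc -exprS.
have -> : (M - 2).+1 = (M - 1)%N by lia.
done.
Qed.

Lemma card_fibers (M : finType) (S : finType) (P : {set M * S}) :
  (\sum_k #|[set b | (k, b) \in P]| = #|P|)%N.
Proof.
rewrite [RHS]card_sumnat (eq_bigr (fun p => ((p.1, p.2) \in P : nat))); last by case.
rewrite -(pair_bigA _ (fun k b => ((k, b) \in P : nat))) /=.
by apply: eq_bigr => k _; rewrite card_sumnat; apply: eq_bigr => b _; rewrite inE.
Qed.

Lemma countC (R : realType) (S : finType) l M (i0 : 'I_M) a (I : {set 'I_l})
  (P : {set 'I_M * S}) : (0 < #|S|)%N -> [forall jb in P, jb.1 != i0] ->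
  \sum_(f : {ffun 'I_M -> l.-tuple S})
    (([&& I \subset pos (f i0) a, (4 * #|I| <= #|pos (f i0) a|)%N &
          [forall jb in P, bad (f i0) a I (f jb.1) jb.2]] : nat)%:R : R)
  <= ((#|S|%:R)^+l)^+M * expR (- (#|P|%:R * #|I|%:R / (2 * #|S|%:R))).
Proof.
move=> S0 Pav.
have M0 : (0 < M)%N := leq_ltn_trans (leq0n i0) (ltn_ord i0).
pose Q (v : l.-tuple S) := (I \subset pos v a) && (4 * #|I| <= #|pos v a|)%N.
pose Tj (k : 'I_M) := [set b | (k, b) \in P].
pose G (v : l.-tuple S) (k : 'I_M) (w : l.-tuple S) : R :=
  (if k == i0 then (Q v : nat)%:R else 1) * ([forall b in Tj k, bad v a I w b] : nat)%:R.
have G0 v k w : 0 <= G v k w.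
  by rewrite /G; apply: mulr_ge0; [case: ifP => _|]; rewrite ?ler0n ?ler01.
set Nw : R := (#|S|%:R)^+l.
have Nw0 : 0 <= Nw by rewrite exprn_ge0 ?ler0n.
set r : R := #|S|%:R.
set s : R := #|I|%:R.
have r0 : 0 < r by rewrite ltr0n.
pose c (k : 'I_M) : R := (if k == i0 then 1 else Nw) * expR (- (#|Tj k|%:R * s / (2 * r))).
apply: (@le_trans _ _ (\sum_(f : {ffun 'I_M -> l.-tuple S}) \prod_k G (f i0) k (f k))).
  apply: ler_sum => f _.
  case: (boolP [&& _, _ & _]) => [/and3P [H1 H2 H3]|_]; last first.
    by apply: prodr_ge0 => k _.
  rewrite big1 // => k _; rewrite /G.
  have -> : Q (f i0) by rewrite /Q H1 H2.
  have -> : [forall b in Tj k, bad (f i0) a I (f k) b].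
    apply/forall_inP => b; rewrite inE => kb.
    by have := forall_inP H3 _ kb.
  by case: ifP; rewrite mulr1.
rewrite cond_sum.
apply: (@le_trans _ _ (\sum_(v : l.-tuple S) \prod_k c k)).
  apply: ler_sum => v _.
  case: (boolP (Q v)) => Qv; last first.
    rewrite (bigD1 i0) //= eqxx /G eqxx (negPf Qv) /= !mul0r.
    by apply: prodr_ge0 => k _; rewrite /c mulr_ge0 ?expR_ge0 //; case: ifP => _; rewrite ?ler01.
  apply: ler_prod => k _; apply/andP; split.
    by case: ifP => _ //; apply: sumr_ge0.
  case: (boolP (k == i0)) => [/eqP ->|ki].
    rewrite /c /G eqxx.
    have -> : #|Tj i0| = 0%N.
      apply/eqP; rewrite cards_eq0; apply/eqP/setP => b; rewrite !inE.
      by apply/negP => Hb; have := forall_inP Pav _ Hb; rewrite eqxx.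
    rewrite !mul0r oppr0 expR0 mulr1 Qv mul1r.
    by case: [forall _ in _, _].
  rewrite /c /G (negPf ki) /=.
  under eq_bigr do rewrite mul1r.
  move: Qv; rewrite /Q => /andP [H1 H2].
  exact: core.
rewrite sum_words prodM -/Nw.
rewrite (@prod_if1 R _ i0) mul1r -expR_sum.
have Es : \sum_k - (#|Tj k|%:R * s / (2 * r)) = - (#|P|%:R * s / (2 * r)).
  rewrite -(card_fibers P) natr_sum mulr_suml mulr_suml sumrN.
  done.
rewrite Es mulrA -exprS subn1 prednK //.
Qed.

End Part5.
Import Part5.

Module Part6.

Lemma bin_le_pow n k : 'C(n, k) <= n ^ k.
Proof.
elim: n k => [|n IH] [|k] //.
rewrite binS expnS.
have h1 := IH k.+1; have h2 := IH k.
have h3 : n ^ k <= n.+1 ^ k.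
  by elim: (k) => // k' IHk; rewrite !expnS leq_mul.
rewrite expnS in h1.
have : n * n ^ k + n ^ k <= n.+1 * n.+1 ^ k.
  by rewrite mulSn addnC leq_add // leq_mul.
lia.
Qed.

Lemma r3 r : 2 <= r -> 8 <= r ^ 3.
Proof. by move=> h; rewrite (_ : 8 = 2 ^ 3) // leq_exp2r. Qed.

Lemma N1 r n l : 2 <= r -> 1 <= n -> 2 ^ 7 * r ^ 3 * n <= l -> 4 * (2 ^ n) ^ 2 <= r ^ l.
Proof.
move=> hr hn hl.
have h8 := r3 hr.
have : 2 * n + 2 <= l by nia.
move=> h; rewrite -expnM -(expnD 2 2) .
apply: (@leq_trans (2 ^ l)); first by rewrite leq_exp2l //; lia.
by rewrite leq_exp2r //; lia.
Qed.

Local Open Scope ring_scope.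

Lemma natpow_le (R : realType) k : (k%:R : R) <= 2 ^+ k.
Proof.
by rewrite -natrX ler_nat ltnW // ltn_expl.
Qed.

Lemma N2 (R : realType) r n l : (2 <= r)%N -> (1 <= n)%N -> (2 ^ 7 * r ^ 3 * n <= l)%N ->
  4 * ((2 ^ n)%:R * r%:R) * expR (- (l%:R / (18 * r%:R))) <= 1 :> R.
Proof.
move=> hr hn hl.
have h8 := r3 hr.
have hE : (18 * r * (2 + n + r) <= l)%N by nia.
have r0 : 0 < r%:R :> R by rewrite ltr0n; lia.
apply: (@le_trans _ _ (expR ((2 + n + r)%:R) * expR (- (l%:R / (18 * r%:R))))).
  apply: ler_wpM2r; first exact: expR_ge0.
  apply: le_trans (pow2_le _ _).
  rewrite !exprD natrX.
  rewrite (_ : 4 = 2 ^+ 2) ?mulrA; last by rewrite expr2; lra.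
  apply: ler_wpM2l; first by rewrite mulr_ge0 ?exprn_ge0.
  exact: natpow_le.
rewrite -expRD -[X in _ <= X]expR0 ler_expR.
have : ((18 * r * (2 + n + r))%:R : R) <= l%:R by rewrite ler_nat.
rewrite !natrM.
set E : R := (2 + n + r)%:R; set L : R := l%:R; set rr : R := r%:R => h.
have -> : E + - (L / (18 * rr)) = (18 * rr * E - L) / (18 * rr) by field; rewrite lt0r_neq0.
rewrite pmulr_lle0 ?invr_gt0 ?mulr_gt0 //; lra.
Qed.

Lemma N3nat r n l : (2 <= r)%N -> (1 <= n)%N -> (2 ^ 7 * r ^ 3 * n <= l)%N ->
  (16 * r ^ 2 * (2 + (n + r) + l + (n + r) * (199 * r ^ 2)) <= (199 * r ^ 2) * l)%N.
Proof.
move=> hr hn hl.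
have e3 : (r ^ 3 = r * r * r)%N by rewrite !expnS expn0 muln1 mulnA.
have e2 : (r ^ 2 = r * r)%N by rewrite !expnS expn0 muln1.
rewrite e2; rewrite e3 in hl.
nia.
Qed.

Lemma N3 (R : realType) r n l : (2 <= r)%N -> (1 <= n)%N -> (2 ^ 7 * r ^ 3 * n <= l)%N ->
  4 * ((2 ^ n)%:R * r%:R * 2 ^+ l * ((2 ^ n)%:R * r%:R) ^+ (199 * r ^ 2))
    * expR (- ((199 * r ^ 2)%:R * l%:R / (16 * r%:R ^+ 2))) <= 1 :> R.
Proof.
move=> hr hn hl.
set K := (199 * r ^ 2)%N.
have r0 : 0 < r%:R :> R by rewrite ltr0n; lia.
have h2r : r%:R <= 2 ^+ r :> R by exact: natpow_le.
apply: (@le_trans _ _ (expR ((2 + (n + r) + l + (n + r) * K)%:R) *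
            expR (- (K%:R * l%:R / (16 * r%:R ^+ 2))))).
  apply: ler_wpM2r; first exact: expR_ge0.
  have hA : (2^n)%:R * r%:R <= 2 ^+ (n + r) :> R.
    by rewrite exprD natrX; apply: ler_wpM2l; [exact: exprn_ge0 | exact: h2r].
  have hA0 : 0 <= (2^n)%:R * r%:R :> R by rewrite mulr_ge0 ?ler0n.
  apply: le_trans (pow2_le _ _).
  have -> : (2:R) ^+ (2 + (n + r) + l + (n + r) * K) =
      2^+2 * (2^+(n+r) * 2^+l * (2^+(n+r))^+K) by rewrite -exprM -!exprD; congr (_ ^+ _); lia.
  rewrite (_ : 4 = 2 ^+ 2); last by rewrite expr2; lra.
  apply: ler_wpM2l; first exact: exprn_ge0.
  apply: ler_pM; rewrite ?mulr_ge0 ?exprn_ge0 //.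
    by apply: ler_pM; rewrite ?exprn_ge0.
  by apply: lerXn2r; rewrite ?nnegrE ?exprn_ge0.
rewrite -expRD -[X in _ <= X]expR0 ler_expR.
have := N3nat hr hn hl; rewrite -(ler_nat R) !natrM expr2.
set E : R := (2 + (n + r) + l + (n + r) * K)%:R; set L : R := l%:R; set rr : R := r%:R => h.
have -> : E - 199 * (rr * rr) * L / (16 * (rr * rr)) = (16 * (rr * rr) * E - 199 * (rr * rr) * L) / (16 * (rr * rr)).
  by field; rewrite lt0r_neq0.
rewrite pmulr_lle0 ?invr_gt0 ?mulr_gt0 //; lra.
Qed.

End Part6.
Import Part6.

Module Part7.

Definition dup (S : finType) l M (f : {ffun 'I_M -> l.-tuple S}) :=
  [exists i, exists j, (i != j) && (f i == f j)].
Definition low (S : finType) l M (f : {ffun 'I_M -> l.-tuple S}) :=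
  [exists i, exists a, ~~ (l <= 2 * #|S| * #|pos (f i) a|)].
Definition bcond (S : finType) l M K (f : {ffun 'I_M -> l.-tuple S})
  (y : 'I_M * S * {set 'I_l} * {set 'I_M * S}) :=
  [&& #|y.1.2| * (8 * #|S|) == l, #|y.2| == K, [forall jb in y.2, jb.1 != y.1.1.1] &
   [&& y.1.2 \subset pos (f y.1.1.1) y.1.1.2, 4 * #|y.1.2| <= #|pos (f y.1.1.1) y.1.1.2| &
       [forall jb in y.2, bad (f y.1.1.1) y.1.1.2 y.1.2 (f jb.1) jb.2]]].
Definition badc (S : finType) l M K (f : {ffun 'I_M -> l.-tuple S}) :=
  [exists y, bcond K f y].

Local Open Scope ring_scope.

Lemma SA (R : realType) (S : finType) l M :
  \sum_(f : {ffun 'I_M -> l.-tuple S}) ((dup f : nat)%:R : R)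
  <= M%:R * M%:R * ((#|S|%:R)^+l)^+(M - 1).
Proof.
apply: (@le_trans _ _ (\sum_(f : {ffun 'I_M -> l.-tuple S}) \sum_i \sum_j
           (((i != j) && (f i == f j) : nat)%:R : R))).
  apply: ler_sum => f _; apply: le_trans (ind_exists _ _) _.
  by apply: ler_sum => i _; apply: ind_exists.
rewrite exchange_big /=.
apply: (@le_trans _ _ (\sum_(i < M) \sum_(j < M) ((#|S|%:R)^+l)^+(M-1))); last first.
  by rewrite sumr_const sumr_const card_ord -mulrnA -(mulr_natl _ (M * M)%N) natrM.
apply: ler_sum => i _; rewrite exchange_big /=; apply: ler_sum => j _.
case: (boolP (i == j)) => [_|ij].
  by rewrite big1 ?exprn_ge0 ?exprn_ge0 ?ler0n // => f _; rewrite andFb.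
rewrite (eq_bigr (fun f : {ffun 'I_M -> l.-tuple S} => (((f i == f j) : nat)%:R : R))).
  exact: countA.
by move=> f _.
Qed.

Lemma SB (R : realType) (S : finType) l M : (0 < #|S|)%N ->
  \sum_(f : {ffun 'I_M -> l.-tuple S}) ((low f : nat)%:R : R)
  <= (M * #|S|)%:R * (((#|S|%:R)^+l)^+M * expR (- (l%:R / (18 * #|S|%:R)))).
Proof.
move=> S0.
apply: (@le_trans _ _ (\sum_(f : {ffun 'I_M -> l.-tuple S}) \sum_i \sum_a
           (((~~ (l <= 2 * #|S| * #|pos (f i) a|)%N) : nat)%:R : R))).
  apply: ler_sum => f _; apply: le_trans (ind_exists _ _) _.
  by apply: ler_sum => i _; apply: ind_exists.
rewrite exchange_big /=.
set c := (_ * expR _).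
apply: (@le_trans _ _ (\sum_(i < M) \sum_(a : S) c)); last first.
  rewrite sumr_const sumr_const card_ord -mulrnA mulr_natl mulnC.
  exact: lexx.
apply: ler_sum => i _; rewrite exchange_big /=; apply: ler_sum => a _.
exact: countB.
Qed.

Lemma card_Y (S : finType) l M K :
  #|[pred y : 'I_M * S * {set 'I_l} * {set 'I_M * S} | #|y.2| == K]| =
  (M * #|S| * 2 ^ l * 'C(M * #|S|, K))%N.
Proof.
have -> : #|[pred y : 'I_M * S * {set 'I_l} * {set 'I_M * S} | #|y.2| == K]| =
   #|setX [set: 'I_M * S * {set 'I_l}] [set P : {set 'I_M * S} | #|P| == K]|.
  by apply: eq_card => y; rewrite !inE.
rewrite cardsX cardsT card_draws !card_prod card_ord.
by rewrite -(@cardsT {set 'I_l}) -powersetT card_powerset cardsT card_ord.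
Qed.

Lemma SC (R : realType) (S : finType) l M K : (0 < #|S|)%N ->
  \sum_(f : {ffun 'I_M -> l.-tuple S}) ((badc K f : nat)%:R : R)
  <= (M * #|S| * 2 ^ l * 'C(M * #|S|, K))%:R *
     (((#|S|%:R)^+l)^+M * expR (- (K%:R * l%:R / (16 * #|S|%:R ^+ 2)))).
Proof.
move=> S0.
set B := (_ * expR _).
have B0 : 0 <= B by rewrite /B mulr_ge0 ?expR_ge0 ?exprn_ge0 ?exprn_ge0 ?ler0n.
apply: (@le_trans _ _ (\sum_(f : {ffun 'I_M -> l.-tuple S}) \sum_y ((bcond K f y : nat)%:R : R))).
  by apply: ler_sum => f _; apply: ind_exists.
rewrite exchange_big /=.
apply: (@le_trans _ _ (\sum_(y : 'I_M * S * {set 'I_l} * {set 'I_M * S}) (if #|y.2| == K then B else 0))).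
  apply: ler_sum => y _.
  case: (boolP [&& #|y.1.2| * (8 * #|S|) == l, #|y.2| == K & [forall jb in y.2, jb.1 != y.1.1.1]]%N).
    case/and3P => /eqP HI /eqP HP Hav.
    rewrite HP eqxx.
    rewrite (eq_bigr (fun f : {ffun 'I_M -> l.-tuple S} => (([&& y.1.2 \subset pos (f y.1.1.1) y.1.1.2,
        (4 * #|y.1.2| <= #|pos (f y.1.1.1) y.1.1.2|)%N &
        [forall jb in y.2, bad (f y.1.1.1) y.1.1.2 y.1.2 (f jb.1) jb.2]] : nat)%:R : R))); last first.
      by move=> f _; rewrite /bcond HI HP !eqxx Hav.
    apply: le_trans (countC _ _ _ S0 Hav) _.
    rewrite /B; apply: ler_wpM2l; first by rewrite exprn_ge0 ?exprn_ge0 ?ler0n.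
    rewrite ler_expR lerN2 HP.
    have r0 : 0 < #|S|%:R :> R by rewrite ltr0n.
    have -> : l%:R = #|y.1.2|%:R * (8 * #|S|%:R) :> R by rewrite -[in LHS]HI !natrM.
    rewrite le_eqVlt; apply/orP; left; apply/eqP; field.
    by rewrite lt0r_neq0.
  move=> Hst.
  rewrite big1; first by case: ifP.
  move=> f _; have -> : bcond K f y = false.
    by apply/negbTE; apply: contra Hst => /and4P [h1 h2 h3 _]; rewrite h1 h2 h3.
  done.
rewrite -big_mkcond /= sumr_const card_Y mulr_natl.
exact: lexx.
Qed.

End Part7.
Import Part7.

Module Part8.
Local Open Scope ring_scope.

Lemma exists_good (R : realType) (S : finType) n l : (2 <= #|S|)%N -> (1 <= n)%N ->
  (2 ^ 7 * #|S| ^ 3 * n <= l)%N ->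
  exists f : {ffun 'I_(2 ^ n) -> l.-tuple S},
    [&& ~~ dup f, ~~ low f & ~~ badc (199 * #|S| ^ 2)%N f].
Proof.
move=> hr hn hl.
have S0 : (0 < #|S|)%N by lia.
case: (boolP [exists f : {ffun 'I_(2 ^ n) -> l.-tuple S},
    [&& ~~ dup f, ~~ low f & ~~ badc (199 * #|S| ^ 2)%N f]]) => [/existsP //|Hno].
exfalso.
have M0 : (0 < 2 ^ n)%N by rewrite expn_gt0.
have key : \sum_(f : {ffun 'I_(2 ^ n) -> l.-tuple S}) (1 : R) <=
   \sum_(f : {ffun 'I_(2 ^ n) -> l.-tuple S}) (((dup f : nat)%:R : R) + (low f : nat)%:R +
                                   (badc (199 * #|S| ^ 2)%N f : nat)%:R).
  apply: ler_sum => f _.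
  move: (Hno); rewrite negb_exists => /forallP /(_ f).
  case: (dup f); case: (low f); case: (badc _ f) => //= _; lra.
rewrite !big_split /= in key.
set Nw : R := (#|S|%:R)^+l.
have Nw1 : 1 <= Nw.
  by rewrite /Nw exprn_ege1 // ler1n; lia.
have Hsum : \sum_(f : {ffun 'I_(2 ^ n) -> l.-tuple S}) (1 : R) = Nw ^+ (2 ^ n).
  by rewrite sumr_const card_ffun card_tuple card_ord !natrX.
have NwM : Nw ^+ (2 ^ n) = Nw * Nw ^+ (2 ^ n - 1).
  by rewrite -exprS subn1 prednK.
have hA := SA R S l (2 ^ n).
have hB := SB R l (2 ^ n) S0.
have hC := SC R l (2 ^ n) (199 * #|S| ^ 2)%N S0.
rewrite -/Nw in hA hB hC.
rewrite Hsum in key.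
have NwM1 : 1 <= Nw ^+ (2 ^ n) by rewrite exprn_ege1.
have h1R : 4 * ((2 ^ n)%:R * (2 ^ n)%:R) <= Nw.
  by move: (N1 hr hn hl); rewrite -(ler_nat R) natrM !natrX expr2 -/Nw.
have nA : 4 * ((2 ^ n)%:R * (2 ^ n)%:R * Nw ^+ (2 ^ n - 1)) <= Nw ^+ (2 ^ n).
  by rewrite NwM mulrA; apply: ler_wpM2r; rewrite ?exprn_ge0 // (le_trans ler01 Nw1).
set eB := expR _ in hB.
have nB : 4 * ((2 ^ n * #|S|)%:R * (Nw ^+ (2 ^ n) * eB)) <= Nw ^+ (2 ^ n).
  have -> : 4 * ((2 ^ n * #|S|)%:R * (Nw ^+ (2 ^ n) * eB)) =
     (4 * ((2 ^ n)%:R * #|S|%:R) * eB) * Nw ^+ (2 ^ n) by rewrite natrM; ring.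
  rewrite -[X in _ <= X]mul1r; apply: ler_wpM2r; first by rewrite exprn_ge0 // (le_trans ler01 Nw1).
  exact: N2.
set eC := expR _ in hC.
have hZ : ((2 ^ n * #|S| * 2 ^ l * 'C(2 ^ n * #|S|, 199 * #|S| ^ 2))%N%:R : R) <=
    (2 ^ n)%:R * #|S|%:R * 2 ^+ l * ((2 ^ n)%:R * #|S|%:R) ^+ (199 * #|S| ^ 2).
  rewrite !natrM !natrX; apply: ler_wpM2l; first by rewrite !mulr_ge0 ?exprn_ge0 ?ler0n.
  by rewrite -natrX -natrM -natrX ler_nat bin_le_pow.
have nC : 4 * ((2 ^ n * #|S| * 2 ^ l * 'C(2 ^ n * #|S|, 199 * #|S| ^ 2))%N%:R * (Nw ^+ (2 ^ n) * eC))
     <= Nw ^+ (2 ^ n).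
  set X := (_ %:R : R) in hZ *.
  have -> : 4 * (X * (Nw ^+ (2 ^ n) * eC)) = (4 * X * eC) * Nw ^+ (2 ^ n) by ring.
  rewrite -[X in _ <= X]mul1r; apply: ler_wpM2r; first by rewrite exprn_ge0 // (le_trans ler01 Nw1).
  apply: le_trans (N3 R hr hn hl).
  apply: ler_wpM2r; first exact: expR_ge0.
  by apply: ler_wpM2l.
lra.
Qed.

End Part8.
Import Part8.


Module RInst. Import Rstruct.
Definition RR : realType := Rdefinitions.R.
End RInst.

Module LogAux. Import Reals.
Lemma n_ge1 n r : (2 <= r)%N -> n_ge_2_plus_log n r -> (1 <= n)%N.
Proof.
move=> hr; rewrite /n_ge_2_plus_log /log2 => H.
have h1 : (1 < INR r)%R by apply: lt_1_INR; lia.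
have l2 : (0 < ln (IZR 2))%R.
  rewrite -ln_1; apply: ln_increasing; first exact: Rlt_0_1.
  exact: (IZR_lt 1 2 ltac:(reflexivity)).
have lr : (0 < ln (INR r))%R.
  by rewrite -ln_1; apply: ln_increasing => //; exact: Rlt_0_1.
have hd : (0 <= ln (INR r) / ln (IZR 2))%R by apply: Rlt_le; apply: Rdiv_lt_0_compat.
have h2 : (IZR 2 <= INR n)%R.
  apply: Rle_trans H; rewrite -{1}(Rplus_0_r (IZR 2)); exact: Rplus_le_compat_l hd.
have : (2 <= n)%coq_nat by apply: INR_le; rewrite (INR_IZR_INZ 2); exact: h2.
move=> h; lia.
Qed.
End LogAux.
Import LogAux.

Theorem lemma2 :
  exists C : nat,
  forall (Sigma : finType) (r n l : nat),
    #|Sigma| = r -> 2 <= r ->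
    n_ge_2_plus_log n r ->
    2 ^ 7 * r ^ 3 * n <= l ->
    exists S : {set l.-tuple Sigma},
      #|S| = 2 ^ n /\
      forall (v : l.-tuple Sigma) (a : Sigma), v \in S ->
        (* (1) |v[a]| >= l/(2r) *)
        l <= 2 * r * #|pos v a| /\
        (* (2) for every I ⊆ v[a] with |I| = l/(8r) *)
        (forall I : {set 'I_l}, I \subset pos v a -> #|I| * (8 * r) = l ->
           #|[set p : l.-tuple Sigma * Sigma |
                (p.1 \in S) &&
                (#|pos v a :&: pos p.1 p.2| <= 2 * #|I :&: pos p.1 p.2|)]|
             <= C * r ^ 2).
Proof.
exists 200.
move=> Sigma r n l Hr r2 Hlog Hl; subst r.
have n1 := n_ge1 r2 Hlog.
have [f /and3P [Hd Hlo Hbc]] := exists_good RInst.RR r2 n1 Hl.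
have finj : injective f.
  move=> i j Eij; apply/eqP; apply/negPn/negP => ij; move/negP: Hd; apply.
  by apply/existsP; exists i; apply/existsP; exists j; rewrite ij Eij eqxx.
exists (f @: setT); split.
  by rewrite card_imset // cardsT card_ord.
move=> v a /imsetP [i _ ->].
have H1 : l <= 2 * #|Sigma| * #|pos (f i) a|.
  apply/negPn/negP => H; move/negP: Hlo; apply.
  by apply/existsP; exists i; apply/existsP; exists a.
split => //.
move=> I HI HIc.
rewrite leqNgt; apply/negP => Hgt.
set B := [set p | _] in Hgt.
pose P0 := [set jb : 'I_(2 ^ n) * Sigma | (jb.1 != i) && bad (f i) a I (f jb.1) jb.2].
have HB : #|B| <= #|P0| + #|Sigma|.
  have sub : B \subset ((fun jb : 'I_(2 ^ n) * Sigma => (f jb.1, jb.2)) @: P0) :|: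
                       ((fun b : Sigma => (f i, b)) @: setT).
    apply/subsetP => [[w b]]; rewrite inE /= => /andP [/imsetP [j _ ->] Hbad].
    rewrite inE; case: (boolP (j == i)) => [/eqP ->|ji].
      by apply/orP; right; apply/imsetP; exists b.
    apply/orP; left; apply/imsetP; exists (j, b) => //.
    by rewrite inE /= ji.
  apply: leq_trans (subset_leq_card sub) _.
  rewrite cardsU; apply: leq_trans (leq_subr _ _) _.
  apply: leq_add; first exact: leq_imset_card.
  by apply: leq_trans (leq_imset_card _ _) _; rewrite cardsT.
have HK : 199 * #|Sigma| ^ 2 <= #|P0|.
  have : #|Sigma| <= #|Sigma| ^ 2 by rewrite expnS expn1 leq_pmull //; lia.
  lia.
have [P [PP0 Pc]] : exists P : {set 'I_(2 ^ n) * Sigma},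
    P \subset P0 /\ #|P| = 199 * #|Sigma| ^ 2.
  exists [set x in take (199 * #|Sigma| ^ 2) (enum P0)]; split.
    by apply/subsetP => x; rewrite inE => /mem_take; rewrite mem_enum.
  rewrite cardsE; move/card_uniqP: (take_uniq (199 * #|Sigma| ^ 2) (enum_uniq (mem P0))) => ->.
  by rewrite size_takel // -cardE.
move/negP: Hbc; apply; apply/existsP; exists (i, a, I, P).
rewrite /bcond /=; apply/and4P; split.
- by apply/eqP.
- by apply/eqP.
- by apply/forall_inP => jb /(subsetP PP0); rewrite inE => /andP [].
apply/and3P; split => //.
  have := r2; move: H1 HIc; move: (#|pos (f i) a|) (#|I|) (#|Sigma|) => A s r; nia.
by apply/forall_inP => jb /(subsetP PP0); rewrite inE => /andP [_ ->].
Qed.
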